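(* In a hierarchical tensor factorization with mode tree $\mathcal T$ and end tensor $\mathcal W_H$, let $\nu\in\mathrm{int}(\mathcal T)$ and $r\in[R_\nu]$, and let $\overline{\mathcal W}_H^{(\nu,r)}$ be the end tensor obtained by setting the $r$'th row of $W^{(\nu)}$ and the $r$'th columns of $W^{(\nu_c)}$, $\nu_c\in C(\nu)$, to zero (all other entries unchanged). Then $$\|\mathcal W_H-\overline{\mathcal W}_H^{(\nu,r)}\|\le\sigma_{\nu,r}\cdot\prod_{\nu'\in\mathcal T\setminus(\{\nu\}\cup C(\nu))}\|W^{(\nu')}\|.$$
   Context: Fix $N\in\mathbb N$, $D_1,\dots,D_N\in\mathbb N$; $[K]:=\{1,\dots,K\}$; norms are Frobenius norms; $\otimes$ the tensor product. A mode tree $\mathcal T$ over $[N]$ is a rooted tree whose nodes are labeled by subsets of $[N]$, with exactly $N$ leaves labeled $\{1\},\dots,\{N\}$, and where each interior node's label is the union of its children's labels; nodes are identified with labels, root $[N]$, $\mathrm{int}(\mathcal T)$ interior nodes, $Pa(\nu)$ parent, $C(\nu)$ children (fixed order). A hierarchical tensor factorization has $R_\nu\in\mathbb N$ ($\nu\in\mathrm{int}(\mathcal T)$), $R_{Pa([N])}:=1$, $R_{\{n\}}:=D_n$, weight matrices $W^{(\nu)}\in\mathbb R^{R_\nu\times R_{Pa(\nu)}}$. Intermediate tensors: $\mathcal W^{(\{n\},r)}:=W^{(\{n\})}_{:,r}$; for $\nu\in\mathrm{int}(\mathcal T)\setminus\{[N]\}$ (leaves to root), $r\in[R_{Pa(\nu)}]$: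 $\mathcal W^{(\nu,r)}:=\pi_\nu\big(\sum_{r'=1}^{R_\nu}W^{(\nu)}_{r',r}\bigotimes_{\nu_c\in C(\nu)}\mathcal W^{(\nu_c,r')}\big)$; end tensor $\mathcal W_H:=\pi_{[N]}\big(\sum_{r'=1}^{R_{[N]}}W^{([N])}_{r',1}\bigotimes_{\nu_c\in C([N])}\mathcal W^{(\nu_c,r')}\big)$, where $\pi_\nu$ permutes modes (ordered by children, each child's elements ascending) into ascending order of the elements of $\nu$. $\sigma_{\nu,r}:=\|W^{(\nu)}_{r,:}\|\prod_{\nu_c\in C(\nu)}\|W^{(\nu_c)}_{:,r}\|$ is the norm of the $(\nu,r)$'th local component. *)

(* Defs.v *)
From HB Require Import structures.
From mathcomp Require Import all_boot all_order all_algebra.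
Set Implicit Arguments. Unset Strict Implicit. Unset Printing Implicit Defensive.
Import Order.TTheory GRing.Theory Num.Theory.
Local Open Scope ring_scope.

(* Modes are 'I_N = {0,...,N-1} (the paper's [N] shifted by one).
   A mode tree is represented by its set of node labels (nodes are
   identified with their labels in the paper). *)

Definition is_mode_tree (N : nat) (T : {set {set 'I_N}}) : bool :=
  [&& [set: 'I_N] \in T,
      [forall n : 'I_N, [set n] \in T],
      set0 \notin T &
      [forall A in T, forall B in T,
         [|| A \subset B, B \subset A | [disjoint A & B]]]].

Definition children (N : nat) (T : {set {set 'I_N}}) (nu : {set 'I_N}) :
  {set {set 'I_N}} :=
  [set c in T | (c \proper nu) &&
     [forall c' in T, ~~ ((c \proper c') && (c' \proper nu))]].

Definition parent_of (N : nat) (T : {set {set 'I_N}}) (nu : {set 'I_N}) :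
  option {set 'I_N} := [pick p in T | nu \in children T p].

Definition leaf_of (N : nat) (nu : {set 'I_N}) : option 'I_N :=
  [pick n : 'I_N | nu == [set n]].

Definition interior (N : nat) (T : {set {set 'I_N}}) (nu : {set 'I_N}) : bool :=
  (nu \in T) && (leaf_of nu == None).

Definition idx (N : nat) (D : 'I_N -> nat) := {dffun forall n : 'I_N, 'I_(D n)}.

Definition rank (N : nat) (D : 'I_N -> nat) (Rk : {set 'I_N} -> nat)
  (nu : {set 'I_N}) : nat :=
  if leaf_of nu is Some n then D n else Rk nu.

Definition prank (N : nat) (D : 'I_N -> nat) (T : {set {set 'I_N}})
  (Rk : {set 'I_N} -> nat) (nu : {set 'I_N}) : nat :=
  if parent_of T nu is Some p then rank D Rk p else 1%N.

(* Intermediate tensors W^(nu,r), in coordinates, as functions of the full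
   multi-index (depending only on the coordinates in nu).  With this
   encoding the mode permutation pi_nu is the identity and the tensor
   product of the children tensors (on disjoint mode sets) is the pointwise
   product.  k is fuel (any k >= #|nu| gives the true value). Weight matrices
   are W nu : nat -> nat -> R, only entries (i,j) with
   i < rank nu, j < prank nu being meaningful. *)
Fixpoint itens (N : nat) (R : nzRingType) (D : 'I_N -> nat)
  (T : {set {set 'I_N}}) (Rk : {set 'I_N} -> nat)
  (W : {set 'I_N} -> nat -> nat -> R)
  (k : nat) (nu : {set 'I_N}) (r : nat) (i : idx D) : R :=
  if k is k'.+1 then
    if leaf_of nu is Some n then W nu (nat_of_ord (i n)) r
    else \sum_(r' < Rk nu)
           W nu r' r * \prod_(c in children T nu) itens T Rk W k' c r' i
  else 0.

(* the end tensor W_H (root [N], column index 1 of the R_[N] x 1 matrix) *)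
Definition end_tensor (N : nat) (R : nzRingType) (D : 'I_N -> nat)
  (T : {set {set 'I_N}}) (Rk : {set 'I_N} -> nat)
  (W : {set 'I_N} -> nat -> nat -> R) : idx D -> R :=
  itens T Rk W N [set: 'I_N] 0%N.

Definition tnorm (N : nat) (R : rcfType) (D : 'I_N -> nat) (t : idx D -> R) : R :=
  Num.sqrt (\sum_(i : idx D) t i ^+ 2).

Definition wnorm (N : nat) (R : rcfType) (D : 'I_N -> nat)
  (T : {set {set 'I_N}}) (Rk : {set 'I_N} -> nat)
  (W : {set 'I_N} -> nat -> nat -> R) (nu : {set 'I_N}) : R :=
  Num.sqrt (\sum_(i < rank D Rk nu) \sum_(j < prank D T Rk nu) W nu i j ^+ 2).

Definition row_norm (N : nat) (R : rcfType) (D : 'I_N -> nat)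
  (T : {set {set 'I_N}}) (Rk : {set 'I_N} -> nat)
  (W : {set 'I_N} -> nat -> nat -> R) (nu : {set 'I_N}) (r : nat) : R :=
  Num.sqrt (\sum_(j < prank D T Rk nu) W nu r j ^+ 2).

Definition col_norm (N : nat) (R : rcfType) (D : 'I_N -> nat)
  (Rk : {set 'I_N} -> nat)
  (W : {set 'I_N} -> nat -> nat -> R) (nu : {set 'I_N}) (r : nat) : R :=
  Num.sqrt (\sum_(i < rank D Rk nu) W nu i r ^+ 2).

Definition sigma_loc (N : nat) (R : rcfType) (D : 'I_N -> nat)
  (T : {set {set 'I_N}}) (Rk : {set 'I_N} -> nat)
  (W : {set 'I_N} -> nat -> nat -> R) (nu : {set 'I_N}) (r : nat) : R :=
  row_norm D T Rk W nu r * \prod_(c in children T nu) col_norm D Rk W c r.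

Definition zero_comp (N : nat) (R : nzRingType) (T : {set {set 'I_N}})
  (W : {set 'I_N} -> nat -> nat -> R) (nu : {set 'I_N}) (r : nat) :
  {set 'I_N} -> nat -> nat -> R :=
  fun mu i j => if ((mu == nu) && (i == r)) || ((mu \in children T nu) && (j == r))
                then 0 else W mu i j.

(* Main.v *)
Require Import Defs.
From HB Require Import structures.
From mathcomp Require Import all_boot all_order all_algebra ring lra.
Set Implicit Arguments. Unset Strict Implicit. Unset Printing Implicit Defensive.
Import Order.TTheory GRing.Theory Num.Theory.
Local Open Scope ring_scope.

Section Tree.
Variables (N : nat) (T : {set {set 'I_N}}).
Hypothesis HT : is_mode_tree T.
Implicit Types (x y mu c A B : {set 'I_N}) (n : 'I_N).

Lemma laminar A B : A \in T -> B \in T ->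
  [|| A \subset B, B \subset A | [disjoint A & B]].
Proof.
move=> HA HB; case/and4P: HT => _ _ _ /forall_inP/(_ A HA)/forall_inP/(_ B HB).
done.
Qed.

Lemma T_neq0 A : A \in T -> A != set0.
Proof. case/and4P: HT => _ _ H0 _ HA; apply/eqP => E; by rewrite -E HA in H0. Qed.

Lemma rootT : [set: 'I_N] \in T.
Proof. by case/and4P: HT. Qed.

Lemma singT n : [set n] \in T.
Proof. by case/and4P: HT => _ /forallP. Qed.

Lemma common_false (x a b : {set 'I_N}) : x \in T -> x \subset a -> x \subset b ->
  [disjoint a & b] -> False.
Proof.
move=> /T_neq0/set0Pn[n Hn] Hxa Hxb Hd.
have Ha : n \in a by apply: (subsetP Hxa).
have Hb : n \in b by apply: (subsetP Hxb).
by move: (disjointFr Hd Ha); rewrite Hb.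
Qed.

Lemma child_in c mu : c \in children T mu -> c \in T.
Proof. by rewrite inE => /andP[]. Qed.

Lemma child_proper c mu : c \in children T mu -> c \proper mu.
Proof. by rewrite inE => /andP[_ /andP[]]. Qed.

Lemma child_max c mu c' : c \in children T mu -> c' \in T ->
  c \proper c' -> c' \proper mu -> False.
Proof.
rewrite inE => /andP[_ /andP[_ /forall_inP/(_ c') H]] Hc' H1 H2.
by move: (H Hc'); rewrite H1 H2.
Qed.

Lemma children_disj c1 c2 mu : c1 \in children T mu -> c2 \in children T mu ->
  c1 != c2 -> [disjoint c1 & c2].
Proof.
move=> H1 H2 Hne.
case/or3P: (laminar (child_in H1) (child_in H2)) => // Hs.
- exfalso; apply: (child_max H1 (child_in H2) _ (child_proper H2)).
  by rewrite properEneq Hne.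
- exfalso; apply: (child_max H2 (child_in H1) _ (child_proper H1)).
  by rewrite properEneq eq_sym Hne.
Qed.

Lemma exists_child x mu : x \in T -> x \proper mu ->
  exists2 c, c \in children T mu & x \subset c.
Proof.
move=> HxT Hxmu.
pose P y := [&& y \in T, x \subset y & y \proper mu].
have Px : P x by rewrite /P HxT subxx.
case: (arg_maxnP (fun y => #|y|) Px) => y /and3P[HyT Hxy Hymu] Hmax.
exists y => //; rewrite inE HyT Hymu /=.
apply/forall_inP => c' Hc'; apply/negP => /andP[H1 H2].
have : P c' by rewrite /P Hc' H2 (subset_trans Hxy (proper_sub H1)).
move/Hmax => /= Hle; have := proper_card H1; by rewrite ltnNge Hle.
Qed.

Lemma parent_unique c mu1 mu2 : mu1 \in T -> mu2 \in T ->
  c \in children T mu1 -> c \in children T mu2 -> mu1 = mu2.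
Proof.
move=> H1 H2 Hc1 Hc2.
case: (eqVneq mu1 mu2) => // Hne; exfalso.
case/or3P: (laminar H1 H2) => Hs.
- apply: (child_max Hc2 H1 (child_proper Hc1)); by rewrite properEneq Hne.
- apply: (child_max Hc1 H2 (child_proper Hc2)); by rewrite properEneq eq_sym Hne.
- exact: (common_false (child_in Hc1) (proper_sub (child_proper Hc1))
           (proper_sub (child_proper Hc2)) Hs).
Qed.

Lemma parent_child c mu : mu \in T -> c \in children T mu ->
  parent_of T c = Some mu.
Proof.
move=> HmuT Hc; rewrite /parent_of; case: pickP => [p /andP[HpT Hcp] | H].
  by rewrite (parent_unique HpT HmuT Hcp Hc).
by move: (H mu); rewrite HmuT Hc.
Qed.

Lemma parent_root : parent_of T [set: 'I_N] = None.
Proof.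
rewrite /parent_of; case: pickP => // p /andP[_ /child_proper].
by rewrite properE subsetT andbF.
Qed.

Lemma leaf_ofP x n : leaf_of x = Some n -> x = [set n].
Proof. by rewrite /leaf_of; case: pickP => // m /eqP Hm [<-]. Qed.

Lemma leaf_of1 n : leaf_of [set n] = Some n.
Proof.
rewrite /leaf_of; case: pickP => [m /eqP /set1_inj -> // | H].
by move: (H n); rewrite eqxx.
Qed.

Lemma leaf_no_sub x n : x \in T -> x \proper [set n] -> False.
Proof.
move=> /T_neq0/set0Pn[m Hm]; rewrite properE => /andP[/subsetP/(_ m Hm)].
by rewrite inE => /eqP <-; rewrite sub1set Hm.
Qed.

Lemma nonleaf_child mu : mu \in T -> leaf_of mu = None ->
  exists c, c \in children T mu.
Proof.
move=> HmuT Hl; case/set0Pn: (T_neq0 HmuT) => n Hn.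
have Hp : [set n] \proper mu.
  rewrite properEneq sub1set Hn andbT; apply/eqP => E.
  by rewrite -E leaf_of1 in Hl.
by case: (exists_child (singT n) Hp) => c Hc _; exists c.
Qed.

Lemma nonleaf_super mu x : x \in T -> x \proper mu -> leaf_of mu = None.
Proof.
move=> HxT Hx; case E: (leaf_of mu) => [n|] //.
by rewrite (leaf_ofP E) in Hx; case: (leaf_no_sub HxT Hx).
Qed.

Section Part.
Variables (R : comPzSemiRingType) (F : {set 'I_N} -> R) (P : pred {set 'I_N}).

Lemma part_prod mu : mu \in T ->
  \prod_(x in T | (x \proper mu) && P x) F x =
  \prod_(c in children T mu) \prod_(x in T | (x \subset c) && P x) F x.
Proof.
move=> HmuT.
pose p x := odflt set0 [pick c in children T mu | x \subset c].
rewrite (partition_big p (fun c => c \in children T mu)); last first.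
  move=> x /andP[HxT /andP[Hx _]]; rewrite /p; case: pickP => [c /andP[] //|H].
  by case: (exists_child HxT Hx) => c Hc Hxc; move: (H c); rewrite Hc Hxc.
apply: eq_bigr => c Hc; apply: eq_bigl => x.
apply/idP/idP.
- case/andP => /andP[HxT /andP[Hx HP]]; rewrite /p; case: pickP => [c' /andP[Hc' Hxc'] /eqP E|H].
    by rewrite -E HxT Hxc' HP.
  by case: (exists_child HxT Hx) => c' Hc' Hxc'; move: (H c'); rewrite Hc' Hxc'.
- case/andP => HxT /andP[Hxc HP].
  rewrite HxT HP (sub_proper_trans Hxc (child_proper Hc)) /=.
  rewrite /p; case: pickP => [c' /andP[Hc' Hxc'] | H].
    apply/eqP; case: (eqVneq c' c) => // Hne; exfalso.
    exact: (common_false HxT Hxc' Hxc (children_disj Hc' Hc Hne)).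
  by move: (H c); rewrite Hc Hxc.
Qed.

Lemma split_self mu : mu \in T ->
  \prod_(x in T | (x \subset mu) && P x) F x =
  (if P mu then F mu else 1) * \prod_(x in T | (x \proper mu) && P x) F x.
Proof.
move=> HmuT; case HP: (P mu).
  rewrite (bigD1 mu) /=; last by rewrite HmuT subxx HP.
  congr (_ * _); apply: eq_bigl => x.
  rewrite properEneq; case: (x \in T); case: (x == mu); case: (x \subset mu); by case: (P x).
rewrite mul1r; apply: eq_bigl => x; rewrite properEneq.
case: (eqVneq x mu) => [->|]; by rewrite ?HP ?andbF ?andbT.
Qed.
End Part.

End Tree.
Section Expect.
Variables (N : nat) (D : 'I_N -> nat) (R : rcfType) (i0 : idx D).

Definition Kc : R := (#|{: idx D}|)%:R.
Definition Ex (f : idx D -> R) : R := (\sum_i f i) / Kc.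
Definition dep (f : idx D -> R) (A : {set 'I_N}) :=
  forall i j : idx D, (forall n, n \in A -> i n = j n) -> f i = f j.

Lemma Kc_gt0 : 0 < Kc.
Proof. rewrite /Kc ltr0n; apply/card_gt0P; by exists i0. Qed.

Lemma Kc_neq0 : Kc != 0.
Proof. by rewrite gt_eqF // Kc_gt0. Qed.

Lemma D_gt0 n : (0 < D n)%N.
Proof. by case: (i0 n) => m Hm; apply: leq_ltn_trans Hm. Qed.

Lemma Ex_ext f g : (forall i, f i = g i) -> Ex f = Ex g.
Proof. by move=> H; rewrite /Ex; congr (_ / _); apply: eq_bigr. Qed.

Lemma Ex_ge0 f : (forall i, 0 <= f i) -> 0 <= Ex f.
Proof.
move=> H; rewrite /Ex divr_ge0 ?sumr_ge0 // ?ltW ?Kc_gt0 //.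
Qed.

Lemma Ex_le f g : (forall i, f i <= g i) -> Ex f <= Ex g.
Proof.
move=> H; rewrite /Ex ler_pM2r ?invr_gt0 ?Kc_gt0 //; exact: ler_sum.
Qed.

Lemma Ex_scale a f : Ex (fun i => a * f i) = a * Ex f.
Proof. by rewrite /Ex -mulr_sumr mulrA. Qed.

Lemma Ex_sum (I : Type) (s : seq I) (P : pred I) (F : I -> idx D -> R) :
  Ex (fun i => \sum_(r <- s | P r) F r i) = \sum_(r <- s | P r) Ex (F r).
Proof. by rewrite /Ex exchange_big /= mulr_suml. Qed.

Lemma Ex1 : Ex (fun _ => 1) = 1.
Proof. by rewrite /Ex sumr_const divff // -[_ *+ _]/Kc ?Kc_neq0. Qed.

Definition merge (A : {set 'I_N}) (i j : idx D) : idx D :=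
  finfun (fun n => if n \in A then i n else j n).

Lemma mergeE A i j n : merge A i j n = if n \in A then i n else j n.
Proof. by rewrite /merge ffunE. Qed.

Lemma Ex_mul f g A : dep f A -> dep g (~: A) ->
  Ex (fun i => f i * g i) = Ex f * Ex g.
Proof.
move=> Hf Hg.
pose sg (p : idx D * idx D) := (merge A p.1 p.2, merge A p.2 p.1).
have sgK : involutive sg.
  case=> i j; rewrite /sg /=; congr pair; apply/ffunP => n;
  rewrite !mergeE; by case: (n \in A).
have key : (\sum_i f i) * (\sum_i g i) = (\sum_i f i * g i) * Kc.
  rewrite big_distrlr /= pair_big /= (reindex_inj (inv_inj sgK)) /=.
  have -> : \sum_(p : idx D * idx D) f (sg p).1 * g (sg p).2 =
            \sum_(p : idx D * idx D) f p.1 * g p.1.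
    apply: eq_bigr => -[i j] _ /=; congr (_ * _).
      by apply: Hf => n Hn; rewrite mergeE Hn.
    by apply: Hg => n; rewrite inE => Hn; rewrite mergeE (negbTE Hn).
  rewrite -(pair_big xpredT xpredT (fun i j => f i * g i)) /=.
  rewrite mulr_suml; apply: eq_bigr => i _; rewrite sumr_const mulr_natr //.
rewrite /Ex mulrACA -invfM key invfM mulrA mulfK ?Kc_neq0 //.
Qed.

Definition upd (n : 'I_N) (i : idx D) (a : 'I_(D n)) : idx D :=
  finfun (fun m => if m == n then insubd (i m) (val a) else i m).

Lemma Ex_leaf n (h : nat -> R) :
  Ex (fun i => h (nat_of_ord (i n))) = (\sum_(a < D n) h a) / (D n)%:R.
Proof.
pose ph (p : idx D * 'I_(D n)) := (upd p.1 p.2, p.1 n).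
have updn i a : upd i a n = a.
  by apply: val_inj; rewrite /upd ffunE eqxx insubdK //; exact: ltn_ord.
have phK : involutive ph.
  case=> i a; rewrite /ph /= updn; congr pair; apply/ffunP => m.
  rewrite /upd !ffunE; case: (eqVneq m n) => [E|//].
  subst m; apply: val_inj; rewrite insubdK //; exact: ltn_ord.
have key : (\sum_(i : idx D) h (nat_of_ord (i n))) * (D n)%:R = Kc * \sum_(a < D n) h a.
  have E1 : \sum_(p : idx D * 'I_(D n)) h (nat_of_ord p.2) = Kc * \sum_(a < D n) h a.
    rewrite -(pair_big xpredT xpredT (fun (i : idx D) (a : 'I_(D n)) => h (nat_of_ord a))) /=.
    by rewrite sumr_const mulr_natl.
  rewrite -E1 (reindex_inj (inv_inj phK)) /=.
  rewrite -(pair_big xpredT xpredT (fun (i : idx D) (a : 'I_(D n)) => h (nat_of_ord (i n)))) /=.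
  rewrite mulr_suml; apply: eq_bigr => i _; by rewrite sumr_const card_ord mulr_natr.
have Dn0 : (D n)%:R != 0 :> R by rewrite pnatr_eq0 -lt0n D_gt0.
apply: (mulIf Dn0); rewrite /Ex mulrAC key mulrC mulrA mulVf ?Kc_neq0 // mul1r.
by rewrite mulfVK.
Qed.

Lemma dep_sub f (A B : {set 'I_N}) : (forall n, n \in A -> n \in B) -> dep f A -> dep f B.
Proof. by move=> HAB Hf i j Hij; apply: Hf => n /HAB; apply: Hij. Qed.

Lemma Ex_prod_seq (s : seq {set 'I_N}) (F : {set 'I_N} -> idx D -> R) :
  uniq s -> (forall a b, a \in s -> b \in s -> a != b -> [disjoint a & b]) ->
  (forall c, c \in s -> dep (F c) c) ->
  Ex (fun i => \prod_(c <- s) F c i) = \prod_(c <- s) Ex (F c).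
Proof.
elim: s => [|a s IH] /=.
  by move=> _ _ _; rewrite big_nil (Ex_ext (g := fun _ => 1)) ?Ex1 // => i; rewrite big_nil.
move=> /andP[Has Hu] Hdis Hdep.
rewrite big_cons -IH //; last first.
- by move=> c Hc; apply: Hdep; rewrite inE Hc orbT.
- by move=> x y Hx Hy; apply: Hdis; rewrite inE ?Hx ?Hy orbT.
rewrite (Ex_ext (g := fun i => F a i * \prod_(c <- s) F c i)); last first.
  by move=> i; rewrite big_cons.
apply: (Ex_mul (A := a)); first by apply: Hdep; rewrite inE eqxx.
move=> i j Hij; apply: eq_big_seq => c Hc.
have Hca : c != a by apply: contraNneq Has => <-.
have Hdc : dep (F c) c by apply: Hdep; rewrite inE Hc orbT.
apply: (dep_sub (A := c) (B := ~: a) _ Hdc Hij) => n Hn.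
rewrite inE; apply/negP => Hna.
have := Hdis a c; rewrite inE eqxx inE Hc orbT eq_sym Hca => /(_ isT isT isT) Hd.
by move: (disjointFr Hd Hna); rewrite Hn.
Qed.

Lemma Ex_prod (P : pred {set 'I_N}) (F : {set 'I_N} -> idx D -> R) :
  (forall a b, P a -> P b -> a != b -> [disjoint a & b]) ->
  (forall c, P c -> dep (F c) c) ->
  Ex (fun i => \prod_(c | P c) F c i) = \prod_(c | P c) Ex (F c).
Proof.
move=> Hdis Hdep.
rewrite -big_filter -(Ex_prod_seq (F := F)).
- by apply: Ex_ext => i; rewrite big_filter.
- by rewrite filter_uniq // index_enum_uniq.
- by move=> a b; rewrite !mem_filter => /andP[Ha _] /andP[Hb _]; apply: Hdis.
- by move=> c; rewrite mem_filter => /andP[Hc _]; apply: Hdep.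
Qed.
End Expect.

Section Ineq.
Variable (R : rcfType).

Lemma cauchy_schwarz m (a b : 'I_m -> R) :
  (\sum_r a r * b r) ^+ 2 <= (\sum_r a r ^+ 2) * (\sum_r b r ^+ 2).
Proof.
set A := \sum_r a r ^+ 2; set B := \sum_r b r ^+ 2; set C := \sum_r a r * b r.
have H : 0 <= \sum_r \sum_s (a r * b s - a s * b r) ^+ 2.
  by apply: sumr_ge0 => r _; apply: sumr_ge0 => s _; apply: sqr_ge0.
have E : \sum_r \sum_s (a r * b s - a s * b r) ^+ 2 = 2%:R * (A * B - C ^+ 2).
  have E1 : forall r s, (a r * b s - a s * b r) ^+ 2 =
     a r ^+ 2 * b s ^+ 2 + b r ^+ 2 * a s ^+ 2 - 2%:R * ((a r * b r) * (a s * b s)).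
    by move=> r s; ring.
  under eq_bigr do under eq_bigr do rewrite E1.
  rewrite (eq_bigr (fun r => a r ^+ 2 * B + b r ^+ 2 * A - 2%:R * ((a r * b r) * C))); last first.
    move=> r _; rewrite !sumrB big_split /= /A /B /C !mulr_sumr //.
  rewrite sumrB big_split /= -!mulr_suml -/A -/B -/C -mulr_sumr -mulr_suml -/C.
  ring.
by rewrite E in H; move: H; rewrite pmulr_rge0 ?ltr0n // subr_ge0.
Qed.

Lemma sum2_le m (a b : 'I_m -> R) : (forall r, 0 <= a r) -> (forall r, 0 <= b r) ->
  \sum_r a r * b r <= (\sum_r a r) * (\sum_r b r).
Proof.
move=> Ha Hb; rewrite mulr_suml; apply: ler_sum => r _.
rewrite mulr_sumr (bigD1 r) //= lerDl; apply: sumr_ge0 => s _.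
by rewrite mulr_ge0.
Qed.

Lemma sum_prod_le m (I : Type) (s : seq I) (a0 : 'I_m -> R) (F : I -> 'I_m -> R) :
  (forall r, 0 <= a0 r) -> (forall c r, 0 <= F c r) ->
  \sum_r a0 r * \prod_(c <- s) F c r <= (\sum_r a0 r) * \prod_(c <- s) \sum_r F c r.
Proof.
elim: s a0 => [|c s IH] a0 Ha HF.
  rewrite big_nil mulr1; apply: ler_sum => r _; by rewrite big_nil mulr1.
rewrite (eq_bigr (fun r => (a0 r * F c r) * \prod_(c0 <- s) F c0 r)); last first.
  by move=> r _; rewrite big_cons mulrA.
apply: le_trans (IH _ _ HF) _; first by move=> r; rewrite mulr_ge0.
rewrite big_cons mulrA ler_wpM2r //.
  by apply: prodr_ge0 => c' _; apply: sumr_ge0.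
exact: sum2_le.
Qed.

Lemma sum_prod_le_pred m (I : finType) (P : pred I) (a0 : 'I_m -> R) (F : I -> 'I_m -> R) :
  (forall r, 0 <= a0 r) -> (forall c r, 0 <= F c r) ->
  \sum_r a0 r * \prod_(c | P c) F c r <= (\sum_r a0 r) * \prod_(c | P c) \sum_r F c r.
Proof.
move=> Ha HF.
have H := sum_prod_le [seq c <- index_enum I | P c] Ha HF.
rewrite big_filter in H; apply: le_trans H; rewrite le_eqVlt; apply/orP; left.
by apply/eqP; apply: eq_bigr => r _; rewrite big_filter.
Qed.
End Ineq.


Section Main.
Variables (N : nat) (R : rcfType) (D : 'I_N -> nat) (T : {set {set 'I_N}})
  (Rk : {set 'I_N} -> nat) (W : {set 'I_N} -> nat -> nat -> R).
Hypothesis HT : is_mode_tree T.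
Variable i0 : idx D.
Implicit Types (x y mu c cc d cs : {set 'I_N}).

Definition dd x : R := if leaf_of x is Some n then (D n)%:R else 1.
Definition col2 x (q : nat) : R := \sum_(a < rank D Rk x) W x a q ^+ 2.
Definition wn2 x : R := \sum_(a < rank D Rk x) \sum_(b < prank D T Rk x) W x a b ^+ 2.
Definition ff x : R := wn2 x / dd x.

Lemma dd_gt0 x : 0 < dd x.
Proof. rewrite /dd; case: (leaf_of x) => [n|] //; by rewrite ltr0n (D_gt0 i0). Qed.

Lemma col2_ge0 x q : 0 <= col2 x q.
Proof. by apply: sumr_ge0 => a _; apply: sqr_ge0. Qed.

Lemma wn2_ge0 x : 0 <= wn2 x.
Proof. by apply: sumr_ge0 => a _; apply: sumr_ge0 => b _; apply: sqr_ge0. Qed.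

Lemma ff_ge0 x : 0 <= ff x.
Proof. by rewrite /ff divr_ge0 ?wn2_ge0 // ltW ?dd_gt0. Qed.

Lemma prod_ff_ge0 (P : pred {set 'I_N}) : 0 <= \prod_(x | P x) ff x.
Proof. by apply: prodr_ge0 => x _; apply: ff_ge0. Qed.

Lemma dep_itens (V : {set 'I_N} -> nat -> nat -> R) k mu q :
  dep (fun i : idx D => itens T Rk V k mu q i) mu.
Proof.
elim: k mu q => [|k IH] mu q i j Hij //=.
case E: (leaf_of mu) => [n|].
  by rewrite Hij // (leaf_ofP E) set11.
apply: eq_bigr => r' _; congr (_ * _); apply: eq_bigr => c Hc.
apply: IH => n Hn; apply: Hij; exact: (subsetP (proper_sub (child_proper Hc))).
Qed.

Lemma dep_sq (f : idx D -> R) A : dep f A -> dep (fun i : idx D => f i ^+ 2) A.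
Proof. by move=> H i j Hij; rewrite (H i j Hij). Qed.

Lemma Ex_sq_ge0 (f : idx D -> R) : 0 <= Ex (fun i : idx D => f i ^+ 2).
Proof. by apply: Ex_ge0 => i; apply: sqr_ge0. Qed.

Lemma Ex_prod_children (V : {set 'I_N} -> nat -> nat -> R) k mu (r' : nat) (Q : pred {set 'I_N}) :
  (forall c, Q c -> c \in children T mu) ->
  Ex (fun i : idx D => (\prod_(c | Q c) itens T Rk V k c r' i) ^+ 2) =
  \prod_(c | Q c) Ex (fun i : idx D => itens T Rk V k c r' i ^+ 2).
Proof.
move=> HQ.
rewrite (Ex_ext (g := fun i : idx D => \prod_(c | Q c) itens T Rk V k c r' i ^+ 2)); last first.
  by move=> i; rewrite prodrXl.
apply: (Ex_prod i0) => [a b /HQ Ha /HQ Hb|c _].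
  by move=> Hne; apply: (children_disj HT Ha Hb Hne).
apply: dep_sq; exact: dep_itens.
Qed.

Lemma cs_step (m : nat) (a : 'I_m -> R) (Y : 'I_m -> idx D -> R) :
  Ex (fun i : idx D => (\sum_(r' < m) a r' * Y r' i) ^+ 2) <=
  (\sum_(r' < m) a r' ^+ 2) * \sum_(r' < m) Ex (fun i : idx D => Y r' i ^+ 2).
Proof.
rewrite -Ex_sum -Ex_scale; apply: (Ex_le i0) => i; exact: cauchy_schwarz.
Qed.

Lemma prod_split_true mu : mu \in T ->
  \prod_(x in T | x \subset mu) ff x = ff mu * \prod_(x in T | x \proper mu) ff x.
Proof.
move=> HmuT; have := @split_self N T R ff xpredT mu HmuT => /=.
rewrite (eq_bigl (fun x => (x \in T) && (x \subset mu))) => [->|x]; last by rewrite andbT.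
by congr (_ * _); apply: eq_bigl => x; rewrite andbT.
Qed.

Lemma part_true mu : mu \in T ->
  \prod_(x in T | x \proper mu) ff x =
  \prod_(c in children T mu) \prod_(x in T | x \subset c) ff x.
Proof.
move=> HmuT; have := @part_prod N T HT R ff xpredT mu HmuT => /=.
rewrite (eq_bigl (fun x => (x \in T) && (x \proper mu))) => [->|x]; last by rewrite andbT.
by apply: eq_bigr => c _; apply: eq_bigl => x; rewrite andbT.
Qed.

Lemma all_col_of k c p :
  (forall q, Ex (fun i : idx D => itens T Rk W k c q i ^+ 2) <=
             col2 c q / dd c * \prod_(x in T | x \proper c) ff x) ->
  p \in T -> c \in children T p -> leaf_of p = None ->
  \sum_(r' < Rk p) Ex (fun i : idx D => itens T Rk W k c r' i ^+ 2) <=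
  \prod_(x in T | x \subset c) ff x.
Proof.
move=> Hb HpT Hc Hlp.
apply: (@le_trans _ _ (\sum_(r' < Rk p) col2 c r' / dd c * \prod_(x in T | x \proper c) ff x)).
  by apply: ler_sum => r' _; apply: Hb.
rewrite -!mulr_suml prod_split_true ?(child_in Hc) // /ff.
rewrite le_eqVlt; apply/orP; left; apply/eqP; congr (_ / _ * _).
rewrite /wn2 /prank (parent_child HT HpT Hc) /rank Hlp /col2 exchange_big //.
Qed.

Lemma single_col k c q : c \in T -> (#|c| <= k)%N ->
  Ex (fun i : idx D => itens T Rk W k c q i ^+ 2) <=
  col2 c q / dd c * \prod_(x in T | x \proper c) ff x.
Proof.
elim: k c q => [|k IH] c q HcT Hk.
  by move: Hk; rewrite leqn0 => /eqP/cards0_eq E; move: (T_neq0 HT HcT); rewrite E eqxx.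
rewrite /col2 /dd /rank /=.
case Hl: (leaf_of c) => [n|].
  have := Ex_leaf i0 n (fun a => W c a q ^+ 2) => /= ->.
  rewrite [\prod_(x in T | _) _]big1 ?mulr1 // => x /andP[HxT Hx]; exfalso.
  by rewrite (leaf_ofP Hl) in Hx; apply: (leaf_no_sub HT HxT Hx).
apply: le_trans (cs_step _ _) _.
rewrite divr1; apply: ler_wpM2l; first by apply: sumr_ge0 => a _; apply: sqr_ge0.
rewrite (eq_bigr (fun r' : 'I_(Rk c) => \prod_(cc in children T c) Ex (fun i : idx D => itens T Rk W k cc r' i ^+ 2))); last first.
  by move=> r' _; exact: (@Ex_prod_children W k c r' (fun c0 => c0 \in children T c) (fun _ H => H)).
case: (nonleaf_child HT HcT Hl) => c0 Hc0.
have Hbc cc : cc \in children T c -> forall q',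
   Ex (fun i : idx D => itens T Rk W k cc q' i ^+ 2) <=
   col2 cc q' / dd cc * \prod_(x in T | x \proper cc) ff x.
  move=> Hcc q'; apply: IH; first exact: child_in Hcc.
  by rewrite -ltnS; apply: leq_trans Hk; apply: proper_card; apply: child_proper Hcc.
apply: (@le_trans _ _ (\prod_(cc in children T c) \sum_(r' < Rk c)
            Ex (fun i : idx D => itens T Rk W k cc r' i ^+ 2))).
  under eq_bigr do rewrite (bigD1 c0) //=.
  rewrite [X in _ <= X](bigD1 c0) //=.
  apply: sum_prod_le_pred => [r'|cc r']; exact: Ex_sq_ge0.
rewrite part_true //; apply: ler_prod => cc Hcc; apply/andP; split.
  by apply: sumr_ge0 => r' _; apply: Ex_sq_ge0.
exact: (all_col_of (Hbc cc Hcc) HcT Hcc Hl).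
Qed.

Lemma card_idx : #|{: idx D}| = (\prod_(n : 'I_N) D n)%N.
Proof.
rewrite /idx card_dep_ffun foldrE big_map.
rewrite enumT; apply: (@eq_bigr nat 1%N muln) => n _; exact: card_ord.
Qed.

Lemma prod_dd : \prod_(x in T) dd x = Kc D R.
Proof.
rewrite /Kc card_idx natr_prod.
rewrite (bigID (fun x => leaf_of x != None)) /=.
rewrite [X in _ * X]big1 ?mulr1; last first.
  by move=> x /andP[_]; rewrite negbK /dd => /eqP ->.
pose L := (fun n : 'I_N => [set n]) @: [set: 'I_N].
rewrite (eq_bigl (fun x => x \in L)); last first.
  move=> x; apply/idP/idP.
    case/andP => HxT; case E: (leaf_of x) => [n|] // _.
    by rewrite (leaf_ofP E); apply: imset_f.
  case/imsetP => n _ ->; by rewrite singT // leaf_of1.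
rewrite big_imset /=; last by move=> a b _ _; apply: set1_inj.
rewrite (eq_bigl xpredT); last by move=> n; rewrite inE.
by apply: eq_bigr => n _; rewrite /dd leaf_of1.
Qed.

Section Diff.
Variables (nu : {set 'I_N}) (r : nat).
Hypothesis Hnu : interior T nu.
Hypothesis Hr : (r < Rk nu)%N.

Lemma properxx_false (A : {set 'I_N}) : (A \proper A) = false.
Proof. exact: negbTE (proper_irrefl _). Qed.

Definition W' := zero_comp T W nu r.
Definition Pn x := (x != nu) && (x \notin children T nu).
Definition clean mu := forall x, x \subset mu -> Pn x.

Lemma nuT : nu \in T. Proof. by case/andP: Hnu. Qed.
Lemma nul : leaf_of nu = None. Proof. by case/andP: Hnu => _ /eqP. Qed.

Lemma nu_notchild : nu \notin children T nu.
Proof. by apply/negP => /child_proper; rewrite properxx_false. Qed.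

Lemma W'E mu a b : Pn mu -> W' mu a b = W mu a b.
Proof. by rewrite /W' /zero_comp => /andP[/negbTE -> /negbTE ->]. Qed.

Lemma W'_col c a q : c \in children T nu -> q != r -> W' c a q = W c a q.
Proof.
move=> Hc Hq; rewrite /W' /zero_comp (negbTE Hq) andbF orbF.
have -> : (c == nu) = false.
  by apply/negbTE; apply: contraTneq (child_proper Hc) => ->; rewrite properxx_false.
done.
Qed.

Lemma clean_eq k mu q (i : idx D) : clean mu -> itens T Rk W' k mu q i = itens T Rk W k mu q i.
Proof.
elim: k mu q => [|k IH] mu q Hcl //=.
case: (leaf_of mu) => [n|]; first by rewrite W'E // Hcl.
apply: eq_bigr => r' _; rewrite W'E ?Hcl //; congr (_ * _).
apply: eq_bigr => c Hc; apply: IH => x Hx; apply: Hcl.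
exact: subset_trans Hx (proper_sub (child_proper Hc)).
Qed.

Lemma clean_grandchild cc c : cc \in children T c -> c \in children T nu -> clean cc.
Proof.
move=> Hcc Hc x Hx; rewrite /Pn; apply/andP; split.
  apply/negP => /eqP E; subst x.
  have H1 := sub_proper_trans Hx (child_proper Hcc).
  have := proper_trans H1 (child_proper Hc); by rewrite properxx_false.
apply/negP => Hxc.
have Hxp : x \proper c := sub_proper_trans Hx (child_proper Hcc).
have Hne : x != c by apply: contraTneq Hxp => ->; rewrite properxx_false.
exact: (common_false HT (child_in Hxc) (subxx x) (proper_sub Hxp) (children_disj HT Hxc Hc Hne)).
Qed.

Lemma clean_of_disj c d : [disjoint c & d] -> nu \subset d -> clean c.
Proof.
move=> Hd Hnud x Hx; rewrite /Pn; apply/andP; split.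
  apply/negP => /eqP E; subst x.
  exact: (common_false HT nuT Hx Hnud Hd).
apply/negP => Hxc.
exact: (common_false HT (child_in Hxc) Hx
         (subset_trans (proper_sub (child_proper Hxc)) Hnud) Hd).
Qed.

Lemma child_eq k c q (i : idx D) : c \in children T nu -> q != r ->
  itens T Rk W' k c q i = itens T Rk W k c q i.
Proof.
case: k => [|k] Hc Hq //=.
case: (leaf_of c) => [n|]; first by rewrite W'_col.
apply: eq_bigr => r' _; rewrite W'_col //; congr (_ * _).
apply: eq_bigr => cc Hcc; apply: clean_eq; exact: (clean_grandchild Hcc Hc).
Qed.

Lemma delta_nu k q (i : idx D) :
  itens T Rk W k.+1 nu q i - itens T Rk W' k.+1 nu q i =
  W nu r q * \prod_(c in children T nu) itens T Rk W k c r i.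
Proof.
rewrite /= nul.
pose ro := Ordinal Hr.
rewrite (bigD1 ro) //= [X in _ - X](bigD1 ro) //=.
have -> : W' nu r q = 0 by rewrite /W' /zero_comp !eqxx.
rewrite mul0r add0r.
have -> : \sum_(r' < Rk nu | r' != ro)
             W' nu r' q * \prod_(c in children T nu) itens T Rk W' k c r' i =
          \sum_(r' < Rk nu | r' != ro)
             W nu r' q * \prod_(c in children T nu) itens T Rk W k c r' i.
  apply: eq_bigr => r' Hr'.
  have Hr'r : (nat_of_ord r' != r).
    apply/negP => /eqP E; move/eqP: Hr'; apply; apply: val_inj; exact: E.
  rewrite /W' /zero_comp eqxx (negbTE Hr'r) (negbTE nu_notchild) /=.
  congr (_ * _); apply: eq_bigr => c Hc; exact: child_eq.
by rewrite addrK.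
Qed.

Lemma delta_anc k mu q (i : idx D) cs : mu \in T -> nu \proper mu ->
  cs \in children T mu -> nu \subset cs ->
  itens T Rk W k.+1 mu q i - itens T Rk W' k.+1 mu q i =
  \sum_(r' < Rk mu) W mu r' q *
     ((itens T Rk W k cs r' i - itens T Rk W' k cs r' i) *
      \prod_(c in children T mu | c != cs) itens T Rk W k c r' i).
Proof.
move=> HmuT Hp Hcs Hnucs.
rewrite /= (nonleaf_super HT nuT Hp) -sumrB; apply: eq_bigr => r' _.
have HPmu : Pn mu.
  rewrite /Pn; apply/andP; split.
    by apply: contraTneq Hp => ->; rewrite properxx_false.
  apply/negP => /child_proper H.
  by have := proper_trans H Hp; rewrite properxx_false.
rewrite W'E // (bigD1 cs Hcs) [X in _ - _ * X](bigD1 cs Hcs) /=.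
have -> : \prod_(c in children T mu | c != cs) itens T Rk W' k c r' i =
          \prod_(c in children T mu | c != cs) itens T Rk W k c r' i.
  apply: eq_bigr => c /andP[Hc Hne]; apply: clean_eq.
  exact: (clean_of_disj (children_disj HT Hc Hcs Hne) Hnucs).
by rewrite -mulrBr -mulrBl.
Qed.

Definition Qd : R := \prod_(x in T | ~~ Pn x) (dd x)^-1.
Definition row2 : R := \sum_(j < prank D T Rk nu) W nu r j ^+ 2.
Definition sig2 : R := row2 * \prod_(c in children T nu) col2 c r.

Lemma Qd_eq : \prod_(c in children T nu) (dd c)^-1 = Qd.
Proof.
rewrite /Qd [RHS](bigD1 nu) /=; last by rewrite nuT /Pn eqxx.
rewrite /dd nul invr1 mul1r; apply: eq_bigl => x.
rewrite /Pn negb_and !negbK.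
case: (eqVneq x nu) => [->|Hne] /=; first by rewrite (negbTE nu_notchild) andbF.
by rewrite andbT; case Hx: (x \in children T nu); rewrite ?(child_in Hx) ?andbF.
Qed.

Lemma prod_nu :
  \prod_(c in children T nu) \prod_(x in T | x \proper c) ff x =
  \prod_(x in T | (x \subset nu) && Pn x) ff x.
Proof.
rewrite (@split_self N T R ff Pn nu nuT) /Pn eqxx /= mul1r.
rewrite (@part_prod N T HT R ff Pn nu nuT).
apply: eq_bigr => c Hc; apply: eq_bigl => x.
case HxT: (x \in T) => //=.
rewrite /Pn properEneq.
case: (eqVneq x c) => [->|Hne] /=; first by rewrite Hc /= !andbF.
case Hxc: (x \subset c) => //=.
have -> : (x == nu) = false.
  apply/negbTE; apply: contraTneq Hxc => ->; apply/negP => H.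
  by have := sub_proper_trans H (child_proper Hc); rewrite properxx_false.
rewrite /=; symmetry; apply/negP => Hxch.
exact: (common_false HT HxT (subxx x) Hxc (children_disj HT Hxch Hc Hne)).
Qed.

Lemma anc k mu : mu \in T -> nu \subset mu -> (#|mu| <= k)%N ->
  \sum_(q < prank D T Rk mu)
     Ex (fun i : idx D => (itens T Rk W k mu q i - itens T Rk W' k mu q i) ^+ 2)
  <= sig2 * \prod_(x in T | (x \subset mu) && Pn x) ff x * Qd.
Proof.
elim: k mu => [|k IH] mu HmuT Hnumu Hk.
  by move: Hk; rewrite leqn0 => /eqP/cards0_eq E; move: (T_neq0 HT HmuT); rewrite E eqxx.
case: (eqVneq mu nu) => [E|Hne].
  subst mu.
  rewrite (eq_bigr (fun q : 'I_(prank D T Rk nu) => W nu r q ^+ 2 *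
             \prod_(c in children T nu) Ex (fun i : idx D => itens T Rk W k c r i ^+ 2))); last first.
    move=> q _; rewrite (Ex_ext (g := fun i : idx D => W nu r q ^+ 2 *
             (\prod_(c in children T nu) itens T Rk W k c r i) ^+ 2)); last first.
      by move=> i; rewrite delta_nu exprMn.
    rewrite Ex_scale; congr (_ * _).
    exact: (@Ex_prod_children W k nu r (fun c0 => c0 \in children T nu) (fun _ H => H)).
  rewrite -mulr_suml -/row2.
  apply: (@le_trans _ _ (row2 * ((\prod_(c in children T nu) col2 c r) * Qd *
                           \prod_(x in T | (x \subset nu) && Pn x) ff x))).
    apply: ler_wpM2l; first by apply: sumr_ge0 => j _; apply: sqr_ge0.
    rewrite -Qd_eq -prod_nu -!big_split /=.
    apply: ler_prod => c Hc; apply/andP; split; first exact: Ex_sq_ge0.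
    apply: single_col; first exact: child_in Hc.
    by rewrite -ltnS; apply: leq_trans Hk; apply: proper_card; apply: child_proper Hc.
  by rewrite /sig2 le_eqVlt; apply/orP; left; apply/eqP; ring.
have Hp : nu \proper mu by rewrite properEneq eq_sym Hne Hnumu.
have Hl := nonleaf_super HT nuT Hp.
case: (exists_child nuT Hp) => cs Hcs Hnucs.
have HcsT := child_in Hcs.
have Hkc cc : cc \in children T mu -> (#|cc| <= k)%N.
  by move=> Hcc; rewrite -ltnS; apply: leq_trans Hk; apply: proper_card; apply: child_proper Hcc.
pose Dl (r' : nat) (i : idx D) := itens T Rk W k cs r' i - itens T Rk W' k cs r' i.
pose Y (r' : 'I_(Rk mu)) (i : idx D) :=
  Dl r' i * \prod_(c in children T mu | c != cs) itens T Rk W k c r' i.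
apply: (@le_trans _ _ (\sum_(q < prank D T Rk mu)
          (\sum_(r' < Rk mu) W mu r' q ^+ 2) * \sum_(r' < Rk mu) Ex (fun i => Y r' i ^+ 2))).
  apply: ler_sum => q _.
  rewrite (Ex_ext (g := fun i : idx D => (\sum_(r' < Rk mu) W mu r' q * Y r' i) ^+ 2)).
    exact: cs_step.
  by move=> i; rewrite (delta_anc k q i HmuT Hp Hcs Hnucs).
rewrite -mulr_suml.
have Hw : \sum_(q < prank D T Rk mu) \sum_(r' < Rk mu) W mu r' q ^+ 2 = wn2 mu.
  by rewrite /wn2 /rank Hl exchange_big.
rewrite Hw.
have HY r' : Ex (fun i => Y r' i ^+ 2) =
   Ex (fun i => Dl r' i ^+ 2) *
   \prod_(c in children T mu | c != cs) Ex (fun i : idx D => itens T Rk W k c r' i ^+ 2).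
  rewrite -(@Ex_prod_children W k mu r' (fun c0 => (c0 \in children T mu) && (c0 != cs)));
    last by move=> c /andP[].
  rewrite -(Ex_mul i0 (A := cs)).
  - by apply: Ex_ext => i; rewrite /Y exprMn.
  - apply: dep_sq => i j Hij; rewrite /Dl.
    by rewrite (@dep_itens W k cs r' i j Hij) (@dep_itens W' k cs r' i j Hij).
  - move=> i j Hij; congr (_ ^+ 2); apply: eq_bigr => c /andP[Hc Hne'].
    apply: dep_itens => n Hn; apply: Hij.
    rewrite inE; apply/negP => Hncs.
    by move: (disjointFr (children_disj HT Hc Hcs Hne') Hn); rewrite Hncs.
rewrite (eq_bigr _ (fun r' _ => HY r')).
have Hsp := @sum_prod_le_pred R (Rk mu) _ (fun c0 => (c0 \in children T mu) && (c0 != cs))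
   (fun r' => Ex (fun i => Dl r' i ^+ 2))
   (fun c0 r' => Ex (fun i : idx D => itens T Rk W k c0 r' i ^+ 2))
   (fun r' => Ex_sq_ge0 _) (fun c0 r' => Ex_sq_ge0 _).
apply: (le_trans (ler_wpM2l (wn2_ge0 mu) Hsp)).
have IHcs := IH cs HcsT Hnucs (Hkc cs Hcs).
rewrite /prank (parent_child HT HmuT Hcs) /rank Hl in IHcs.
rewrite (@split_self N T R ff Pn mu HmuT).
have -> : Pn mu.
  rewrite /Pn Hne /=; apply/negP => /child_proper H.
  by have := proper_trans H Hp; rewrite properxx_false.
rewrite (@part_prod N T HT R ff Pn mu HmuT) (bigD1 cs Hcs) /=.
apply: (@le_trans _ _ (wn2 mu * ((sig2 * \prod_(x in T | (x \subset cs) && Pn x) ff x * Qd) *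
         \prod_(c in children T mu | c != cs) \prod_(x in T | (x \subset c) && Pn x) ff x))).
  apply: ler_wpM2l; first exact: wn2_ge0.
  apply: ler_pM.
  - by apply: sumr_ge0 => r' _; apply: Ex_sq_ge0.
  - by apply: prodr_ge0 => c _; apply: sumr_ge0 => r' _; apply: Ex_sq_ge0.
  - exact: IHcs.
  apply: ler_prod => c /andP[Hc Hne']; apply/andP; split.
    by apply: sumr_ge0 => r' _; apply: Ex_sq_ge0.
  have -> : \prod_(x in T | (x \subset c) && Pn x) ff x = \prod_(x in T | x \subset c) ff x.
    apply: eq_bigl => x; case: (x \in T) => //=.
    case Hxc: (x \subset c) => //=.
    exact: (clean_of_disj (children_disj HT Hc Hcs Hne') Hnucs Hxc).
  apply: (all_col_of _ HmuT Hc Hl) => q.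
  apply: single_col; [exact: child_in Hc | exact: Hkc].
rewrite /ff /dd Hl divr1.
by rewrite le_eqVlt; apply/orP; left; apply/eqP; ring.
Qed.

Lemma final_sq :
  \sum_(i : idx D) (end_tensor T Rk W i - end_tensor T Rk (zero_comp T W nu r) i) ^+ 2 <=
  (sigma_loc D T Rk W nu r * \prod_(nu' in T :\: (nu |: children T nu)) wnorm D T Rk W nu') ^+ 2.
Proof.
have Hcard : (#|[set: 'I_N]| <= N)%N by rewrite cardsT card_ord.
have H := @anc N [set: 'I_N] (rootT HT) (subsetT nu) Hcard.
rewrite /prank parent_root big_ord1 in H.
have E1 : \sum_(i : idx D) (end_tensor T Rk W i - end_tensor T Rk (zero_comp T W nu r) i) ^+ 2 =
   Ex (fun i : idx D => (itens T Rk W N [set: 'I_N] 0%N i - itens T Rk W' N [set: 'I_N] 0%N i) ^+ 2) * Kc D R.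
  by rewrite /Ex divfK; [reflexivity | exact: Kc_neq0 i0].
rewrite E1.
apply: le_trans; first exact: (ler_wpM2r (ltW (@Kc_gt0 N D R i0)) H).
rewrite exprMn -prodrXl /sigma_loc exprMn -prodrXl /row_norm sqr_sqrtr; last first.
  by apply: sumr_ge0 => j _; apply: sqr_ge0.
rewrite [\prod_(i in children T nu) _](eq_bigr (fun c => col2 c r)); last first.
  by move=> c _; rewrite /col_norm sqr_sqrtr //; apply: col2_ge0.
rewrite [X in _ <= _ * X](eq_bigr (fun x => wn2 x)); last first.
  by move=> x _; rewrite /wnorm sqr_sqrtr //; apply: wn2_ge0.
have Eff : \prod_(x in T | (x \subset [set: 'I_N]) && Pn x) ff x =
    \prod_(x in T :\: (nu |: children T nu)) wn2 x * \prod_(x in T | Pn x) (dd x)^-1.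
  rewrite (eq_bigl (fun x => (x \in T) && Pn x)); last by move=> x; rewrite subsetT.
  rewrite [\prod_(x in T :\: _) _](eq_bigl (fun x => (x \in T) && Pn x)); last first.
    by move=> x; rewrite in_setD in_setU1 /Pn negb_or andbC.
  by rewrite -big_split; apply: eq_bigr => x _; rewrite /ff.
have EQ : \prod_(x in T | Pn x) (dd x)^-1 * Qd = (Kc D R)^-1.
  by rewrite /Qd -bigID /= prodfV prod_dd.
rewrite Eff.
have -> : sig2 * (\prod_(x in T :\: (nu |: children T nu)) wn2 x *
             \prod_(x in T | Pn x) (dd x)^-1) * Qd * Kc D R =
          sig2 * \prod_(x in T :\: (nu |: children T nu)) wn2 x *
             ((\prod_(x in T | Pn x) (dd x)^-1 * Qd) * Kc D R) by ring.
rewrite EQ mulVf; last exact: (@Kc_neq0 N D R i0).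
by rewrite mulr1 /sig2 /row2.
Qed.

End Diff.
End Main.

Unset Implicit Arguments.

Theorem lemma15 (N : nat) (R : rcfType) (D : 'I_N -> nat)
  (T : {set {set 'I_N}}) (Rk : {set 'I_N} -> nat)
  (W : {set 'I_N} -> nat -> nat -> R) (nu : {set 'I_N}) (r : nat) :
  is_mode_tree T -> interior T nu -> (r < Rk nu)%N ->
  tnorm (fun i : idx D => end_tensor T Rk W i - end_tensor T Rk (zero_comp T W nu r) i)
  <= sigma_loc D T Rk W nu r *
     \prod_(nu' in T :\: (nu |: children T nu)) wnorm D T Rk W nu'.
Proof.
move=> HT Hnu Hr.
have HB : 0 <= sigma_loc D T Rk W nu r *
     \prod_(nu' in T :\: (nu |: children T nu)) wnorm D T Rk W nu'.
  apply: mulr_ge0; last by apply: prodr_ge0 => x _; apply: sqrtr_ge0.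
  by apply: mulr_ge0; [apply: sqrtr_ge0 | apply: prodr_ge0 => x _; apply: sqrtr_ge0].
case: (pickP (@predT (idx D))) => [i0 _ | Hno]; last first.
  rewrite /tnorm big1 ?sqrtr0 // => i _; by move: (Hno i).
rewrite /tnorm -(ger0_norm HB) -sqrtr_sqr ler_sqrt ?sqr_ge0 //.
exact: (@final_sq N R D T Rk W HT i0 nu r Hnu Hr).
Qed.
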